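(* Let $n\neq 1$ be a real number, $k_n=n-1$, and $k_0,k_1,k_2\in\mathbb{R}$. On the phase space with canonical coordinates $(r,\phi,p_r,p_\phi)$, $r>0$, restricted to the open set where $\sin(k_n\phi)\neq 0$, consider $$H_{nc1}=\tfrac12 r^{2n}\Big(p_r^2+\tfrac{p_\phi^2}{r^2}\Big)+k_0r^{n-1}+r^{2k_n}\Big(\frac{k_1}{\sin^2(k_n\phi)}+k_2\frac{\cos(k_n\phi)}{\sin^2(k_n\phi)}\Big).$$ With $P_2=r^n\big(p_r\sin(k_n\phi)-\tfrac1r p_\phi\cos(k_n\phi)\big)$, define $$J_{c2}=p_\phi^2+2\Big(\frac{k_1}{\sin^2(k_n\phi)}+k_2\frac{\cos(k_n\phi)}{\sin^2(k_n\phi)}\Big),$$ $$J_{c3}=P_2p_\phi-k_0\cos(k_n\phi)-2k_1r^{k_n}\csc(k_n\phi)\cot(k_n\phi)-k_2r^{k_n}\big(\csc^2(k_n\phi)+\cot^2(k_n\phi)\big).$$ Then $\{J_{c2},H_{nc1}\}=0$, $\{J_{c3},H_{nc1}\}=0$, and $dJ_{c2}\wedge dJ_{c3}\wedge dH_{nc1}\neq 0$; hence $H_{nc1}$ is superintegrable.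
   Context: The Poisson bracket is the canonical one in $(r,\phi,p_r,p_\phi)$. *)

(* Defs.v *)
From Stdlib Require Import Reals.
From Coquelicot Require Import Coquelicot.
Open Scope R_scope.

Definition Fn := R -> R -> R -> R -> R.

Definition d_r (F : Fn) : Fn := fun r ph pr pph => Derive (fun t => F t ph pr pph) r.
Definition d_phi (F : Fn) : Fn := fun r ph pr pph => Derive (fun t => F r t pr pph) ph.
Definition d_pr (F : Fn) : Fn := fun r ph pr pph => Derive (fun t => F r ph t pph) pr.
Definition d_pphi (F : Fn) : Fn := fun r ph pr pph => Derive (fun t => F r ph pr t) pph.

Definition pbracket (F G : Fn) : Fn := fun r ph pr pph =>
  d_r F r ph pr pph * d_pr G r ph pr pph - d_pr F r ph pr pph * d_r G r ph pr pph
  + d_phi F r ph pr pph * d_pphi G r ph pr pph - d_pphi F r ph pr pph * d_phi G r ph pr pph.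

Definition dcomp (F : Fn) (i : nat) : Fn :=
  match i with
  | 0%nat => d_r F | 1%nat => d_phi F | 2%nat => d_pr F | _ => d_pphi F
  end.

Definition det3 (a11 a12 a13 a21 a22 a23 a31 a32 a33 : R) : R :=
  a11 * (a22 * a33 - a23 * a32) - a12 * (a21 * a33 - a23 * a31)
  + a13 * (a21 * a32 - a22 * a31).

Definition wedge3_comp (F G K : Fn) (i j k : nat) : Fn := fun r ph pr pph =>
  det3 (dcomp F i r ph pr pph) (dcomp F j r ph pr pph) (dcomp F k r ph pr pph)
       (dcomp G i r ph pr pph) (dcomp G j r ph pr pph) (dcomp G k r ph pr pph)
       (dcomp K i r ph pr pph) (dcomp K j r ph pr pph) (dcomp K k r ph pr pph).

Definition wedge3_nonzero_at (F G K : Fn) (r ph pr pph : R) : Prop :=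
  exists i j k : nat, (i < j)%nat /\ (j < k)%nat /\ (k < 4)%nat /\
    wedge3_comp F G K i j k r ph pr pph <> 0.

Definition Vang (n k1 k2 ph : R) : R :=
  k1 / (sin ((n - 1) * ph)) ^ 2 + k2 * cos ((n - 1) * ph) / (sin ((n - 1) * ph)) ^ 2.

Definition H_nc1 (n k0 k1 k2 : R) : Fn := fun r ph pr pph =>
  / 2 * Rpower r (2 * n) * (pr ^ 2 + pph ^ 2 / r ^ 2)
  + k0 * Rpower r (n - 1)
  + Rpower r (2 * (n - 1)) * Vang n k1 k2 ph.

Definition P2 (n : R) : Fn := fun r ph pr pph =>
  Rpower r n * (pr * sin ((n - 1) * ph) - / r * pph * cos ((n - 1) * ph)).

Definition J_c2 (n k1 k2 : R) : Fn := fun r ph pr pph =>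
  pph ^ 2 + 2 * Vang n k1 k2 ph.

Definition csc (x : R) : R := / sin x.
Definition cot (x : R) : R := cos x / sin x.

Definition J_c3 (n k0 k1 k2 : R) : Fn := fun r ph pr pph =>
  P2 n r ph pr pph * pph - k0 * cos ((n - 1) * ph)
  - 2 * k1 * Rpower r (n - 1) * csc ((n - 1) * ph) * cot ((n - 1) * ph)
  - k2 * Rpower r (n - 1) * (csc ((n - 1) * ph) ^ 2 + cot ((n - 1) * ph) ^ 2).

(* Main.v *)
Require Import Defs.
From Stdlib Require Import Reals Lra Lia.
From Coquelicot Require Import Coquelicot.
Open Scope R_scope.

Lemma e2n n r : 0 < r -> exp (2*n*ln r) = exp ((n-1)*ln r)^2 * r^2.
Proof. intros. replace (2*n*ln r) with ((n-1)*ln r + (n-1)*ln r + ln r + ln r) by ring.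
rewrite !exp_plus, exp_ln; [ring|auto]. Qed.
Lemma en n r : 0 < r -> exp (n*ln r) = exp ((n-1)*ln r) * r.
Proof. intros. replace (n*ln r) with ((n-1)*ln r + ln r) by ring.
rewrite !exp_plus, exp_ln; [ring|auto]. Qed.
Lemma e2m n r : exp (2*(n-1)*ln r) = exp ((n-1)*ln r)^2.
Proof. intros. replace (2*(n-1)*ln r) with ((n-1)*ln r + (n-1)*ln r) by ring.
rewrite !exp_plus; ring. Qed.

Ltac fin n r := rewrite ?(e2n n r), ?(en n r), ?(e2m n r); auto; unfold Vang; field; repeat split; auto; try nra.
Ltac sides := repeat split; auto; try nra.

Section S.
Variables (n k0 k1 k2 r ph pr pph : R).
Hypothesis (hr : 0 < r) (hs : sin ((n-1)*ph) <> 0).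
Let E := Rpower r (n-1).
Let s := sin ((n-1)*ph).
Let c := cos ((n-1)*ph).
Let m := n - 1.
Let V := (k1 + k2*c)/s^2.

Lemma Hr : d_r (H_nc1 n k0 k1 k2) r ph pr pph =
  n*E^2*r*pr^2+(n-1)*E^2*pph^2/r+k0*m*E/r+2*m*E^2*V/r.
Proof. unfold d_r, H_nc1, Vang, E, V, m, c, s, Rpower.
apply is_derive_unique. auto_derive; [sides|fin n r]. Qed.
Lemma Hph : d_phi (H_nc1 n k0 k1 k2) r ph pr pph =
  E^2 * (-m*(k2*s^2+2*c*(k1+k2*c))/s^3).
Proof. unfold d_phi, H_nc1, Vang, E, V, m, c, s, Rpower.
apply is_derive_unique. auto_derive; [sides|fin n r]. Qed.
Lemma Hpr : d_pr (H_nc1 n k0 k1 k2) r ph pr pph = E^2*r^2*pr.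
Proof. unfold d_pr, H_nc1, Vang, E, V, m, c, s, Rpower.
apply is_derive_unique. auto_derive; [sides|fin n r]. Qed.
Lemma Hpp : d_pphi (H_nc1 n k0 k1 k2) r ph pr pph = E^2*pph.
Proof. unfold d_pphi, H_nc1, Vang, E, V, m, c, s, Rpower.
apply is_derive_unique. auto_derive; [sides|fin n r]. Qed.

Lemma Jr : d_r (J_c3 n k0 k1 k2) r ph pr pph =
 n*E*(pr*s-pph*c/r)*pph+E*r*(pph*c/r^2)*pph-2*k1*m*E/r*c/s^2-k2*m*E/r*(1+c^2)/s^2.
Proof. unfold d_r, J_c3, Vang, P2, csc, cot, E, V, m, c, s, Rpower.
apply is_derive_unique. auto_derive; [sides|fin n r]. Qed.
Lemma Jph : d_phi (J_c3 n k0 k1 k2) r ph pr pph =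
 E*r*(pr*c*m+pph*s*m/r)*pph+k0*m*s+2*k1*E*m*(s^2+2*c^2)/s^3+k2*E*2*m*c*(s^2+1+c^2)/s^3.
Proof. unfold d_phi, J_c3, Vang, P2, csc, cot, E, V, m, c, s, Rpower.
apply is_derive_unique. auto_derive; [sides|fin n r]. Qed.
Lemma Jpr : d_pr (J_c3 n k0 k1 k2) r ph pr pph = E*r*s*pph.
Proof. unfold d_pr, J_c3, Vang, P2, csc, cot, E, V, m, c, s, Rpower.
apply is_derive_unique. auto_derive; [sides|fin n r]. Qed.
Lemma Jpp : d_pphi (J_c3 n k0 k1 k2) r ph pr pph = E*r*pr*s-2*E*c*pph.
Proof. unfold d_pphi, J_c3, Vang, P2, csc, cot, E, V, m, c, s, Rpower.
apply is_derive_unique. auto_derive; [sides|fin n r]. Qed.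

Lemma J2r : d_r (J_c2 n k1 k2) r ph pr pph = 0.
Proof. unfold d_r, J_c2, Vang. apply is_derive_unique. auto_derive; [sides|fin n r]. Qed.
Lemma J2pr : d_pr (J_c2 n k1 k2) r ph pr pph = 0.
Proof. unfold d_pr, J_c2, Vang. apply is_derive_unique. auto_derive; [sides|fin n r]. Qed.
Lemma J2pp : d_pphi (J_c2 n k1 k2) r ph pr pph = 2*pph.
Proof. unfold d_pphi, J_c2, Vang. apply is_derive_unique. auto_derive; [sides|fin n r]. Qed.
Lemma J2ph : d_phi (J_c2 n k1 k2) r ph pr pph = 2*(-m*(k2*s^2+2*c*(k1+k2*c))/s^3).
Proof. unfold d_phi, J_c2, Vang, m, c, s. apply is_derive_unique. auto_derive; [sides|fin n r]. Qed.
End S.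


Lemma alg n k0 k1 k2 E r s c pr pph : r <> 0 -> s <> 0 -> s^2 + c^2 = 1 ->
 let m := n - 1 in let V := (k1+k2*c)/s^2 in
 (n*E*(pr*s-pph*c/r)*pph+E*r*(pph*c/r^2)*pph-2*k1*m*E/r*c/s^2-k2*m*E/r*(1+c^2)/s^2) * (E^2*r^2*pr)
 - (E*r*s*pph) * (n*E^2*r*pr^2+(n-1)*E^2*pph^2/r+k0*m*E/r+2*m*E^2*V/r)
 + (E*r*(pr*c*m+pph*s*m/r)*pph+k0*m*s+2*k1*E*m*(s^2+2*c^2)/s^3+k2*E*2*m*c*(s^2+1+c^2)/s^3) * (E^2*pph)
 - (E*r*pr*s-2*E*c*pph) * (E^2 * (-m*(k2*s^2+2*c*(k1+k2*c))/s^3)) = 0.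
Proof. intros hr hs hp m V. unfold m, V.
apply eq_trans with ((s^2+c^2-1)*((n-1)*E^3*k2*(pr*s*r-2*pph*c))/s^3).
field; auto. rewrite hp; field; auto.
Qed.

Theorem mainTheorem7 (n k0 k1 k2 : R) (hn : n <> 1) :
  (forall r ph pr pph, 0 < r -> sin ((n - 1) * ph) <> 0 ->
     pbracket (J_c2 n k1 k2) (H_nc1 n k0 k1 k2) r ph pr pph = 0 /\
     pbracket (J_c3 n k0 k1 k2) (H_nc1 n k0 k1 k2) r ph pr pph = 0) /\
  (exists r ph pr pph, 0 < r /\ sin ((n - 1) * ph) <> 0 /\
     wedge3_nonzero_at (J_c2 n k1 k2) (J_c3 n k0 k1 k2) (H_nc1 n k0 k1 k2) r ph pr pph).
Proof.
split.
- intros r ph pr pph hr hs. unfold pbracket. split.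
  + rewrite J2r, J2pr, J2pp, J2ph, Hr, Hph, Hpr, Hpp; auto. field; repeat split; auto; lra.
  + rewrite Jr, Jph, Jpr, Jpp, Hr, Hph, Hpr, Hpp; auto.
    apply alg; [lra|auto|]. transitivity (Rsqr (sin ((n-1)*ph)) + Rsqr (cos ((n-1)*ph))); [unfold Rsqr; ring | apply sin2_cos2].
- assert (hm : n - 1 <> 0) by lra.
  set (a := sqrt (Rabs (2*k1+k0) + 1)).
  assert (ha : a^2 = Rabs (2*k1+k0) + 1).
  { unfold a. simpl. rewrite Rmult_1_r, sqrt_sqrt; auto. pose proof (Rabs_pos (2*k1+k0)); lra. }
  assert (hph : (n-1)*(PI/2/(n-1)) = PI/2) by (field; auto).
  exists 1, (PI/2/(n-1)), 0, a. split; [lra|]. rewrite hph, sin_PI2. split; [lra|].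
  exists 0%nat, 2%nat, 3%nat. split; [lia|]. split; [lia|]. split; [lia|].
  unfold wedge3_comp, det3, dcomp.
  rewrite J2r, J2pr, J2pp, Jpr, Hr, Hpr, Hpp; try lra; try (rewrite hph, sin_PI2; lra).
  rewrite hph, sin_PI2, cos_PI2.
  replace (Rpower 1 (n-1)) with 1 by (unfold Rpower; rewrite ln_1, Rmult_0_r, exp_0; auto).
  match goal with |- ?X <> 0 => replace X with (-2*(n-1)*a^2*(a^2+k0+2*k1)) by (field; auto) end.
  assert (0 < a^2) by (rewrite ha; pose proof (Rabs_pos (2*k1+k0)); lra).
  assert (0 < a^2+k0+2*k1) by (rewrite ha; pose proof (Rle_abs (-(2*k1+k0))); rewrite Rabs_Ropp in *; lra).
  repeat apply Rmult_integral_contrapositive_currified; try lra; auto; intro Ha; rewrite Ha in H; simpl in H; lra.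
Qed.
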